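(* Assume the setting below with $\mu_+(\infty)\le1$ and $\mu_-(\infty)<\infty$, and (A1), (A4), (A5), (A6). Let $0<\mu_0\le\mu_1<\infty$ be constants with $\mu_0\le f'(\rho)\le\mu_1$ and $\mu_0\rho\le f(\rho)\le\mu_1\rho$ for all $\rho\ge0$. Let $r$ be a regular equilibrium solution with $r(1)=\lambda>0$. Then $$\eta_0\tau(\rho)\le r'(\rho)\le\eta_1\tau(\rho)\qquad\text{for all }\rho\in(0,1],$$ where $\eta_0=\min\{\mu_0/\mu_1,\ q_0^{-1}(\mu_1/\mu_0)\}$ and $\eta_1=\max\{\mu_1/\mu_0,\ q_1^{-1}(\mu_0/\mu_1)\}$.
   Context: Setting: $n\ge2$; $\kappa$ continuous on $[0,\infty)$, $\kappa_\pm=\max\{\pm\kappa,0\}$, $\mu_\pm(\lambda)=\int_0^\lambda s\kappa_\pm(s)ds$ (and $\mu_\pm(\infty)$ the corresponding integrals over $[0,\infty)$); $f$ solves $f''+\kappa f=0$, $f(0)=0$, $f'(0)=1$. $\Phi(v_1,\dots,v_n)=\sum_i\phi(v_i)+h(v_1\cdots v_n)$, $\tau(\rho)=f(r(\rho))/f(\rho)$. An equilibrium solution with $r(1)=\lambda$ is $r\in C^1(0,1]$, twice differentiable on $(0,1)$, $r'>0$ on $(0,1]$, $r(0):=\lim_{\rho\to0^+}r(\rho)\ge0$, $r(1)=\lambda$, satisfying on $(0,1)$ $$f(\rho)\big[\phi''(r')+h''(r'\tau^{n-1})\tau^{2(n-1)}\big]r''=(n-1)\big[f'(r)\phi'(\tau)-f'(\rho)\phi'(r')\big]-(n-1)\big(f'(r)r'-f'(\rho)\tau\big)h''(r'\tau^{n-1})\,r'\tau^{2n-3};$$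 regular means $r(0)=0$. (A1) $h$ is $C^2$ and strictly convex. (A4) $\phi:(0,\infty)\to(0,\infty)$ is $C^2$ and convex. (A5) $v\phi'(v)$ is increasing. (A6) there is $t_0\ge0$ with $\phi'(t_0)=0$; $q_1(s)=\sup_{v>t_0}\phi'(v)/\phi'(sv)$ ($s\ge1$), $q_0(s)=\inf_{v>t_0/s}\phi'(v)/\phi'(sv)$ ($s\in(0,1]$) satisfy $q_1\in C^1[1,\infty)$, $q_0\in C^1(0,1]$, $q_1(s)\to0$ as $s\to\infty$, $q_0(s)\to\infty$ as $s\to0^+$, $q_1'<0$, $q_0'<0$. *)

(* Defs.v *)
From Stdlib Require Import Reals.
Open Scope R_scope.

Definition cont_within (D : R -> Prop) (g : R -> R) (x : R) : Prop :=
  limit1_in g D (g x) x.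

(* g has derivative l at x within D (one-sided at endpoints of intervals). *)
Definition has_deriv_within (D : R -> Prop) (g : R -> R) (x l : R) : Prop :=
  limit1_in (fun y => (g y - g x) / (y - x)) (fun y => D y /\ y <> x) l x.

Definition C1_on (D : R -> Prop) (g dg : R -> R) : Prop :=
  (forall x, D x -> has_deriv_within D g x (dg x)) /\
  (forall x, D x -> cont_within D dg x).

Definition C2_on (D : R -> Prop) (g dg ddg : R -> R) : Prop :=
  C1_on D g dg /\ C1_on D dg ddg.

Definition convex_on (D : R -> Prop) (g : R -> R) : Prop :=
  forall x y t, D x -> D y -> 0 <= t <= 1 ->
    g (t * x + (1 - t) * y) <= t * g x + (1 - t) * g y.

Definition strictly_convex_on (D : R -> Prop) (g : R -> R) : Prop :=
  forall x y t, D x -> D y -> x <> y -> 0 < t < 1 ->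
    g (t * x + (1 - t) * y) < t * g x + (1 - t) * g y.

Definition is_glb (E : R -> Prop) (m : R) : Prop :=
  (forall x, E x -> m <= x) /\ (forall b, (forall x, E x -> b <= x) -> b <= m).

Definition kappa_plus (kappa : R -> R) (s : R) : R := Rmax (kappa s) 0.
Definition kappa_minus (kappa : R -> R) (s : R) : R := Rmax (- kappa s) 0.

(* mu_+(oo) <= 1 : the (improper) integral of the nonnegative function
   s * kappa_+(s) over [0,oo) is at most 1, i.e. all partial integrals are. *)
Definition mu_plus_inf_le_1 (kappa : R -> R) : Prop :=
  forall L, 0 <= L ->
    exists pr : Riemann_integrable (fun s => s * kappa_plus kappa s) 0 L,
      RiemannInt pr <= 1.

Definition mu_minus_inf_finite (kappa : R -> R) : Prop :=
  exists B, forall L, 0 <= L ->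
    exists pr : Riemann_integrable (fun s => s * kappa_minus kappa s) 0 L,
      RiemannInt pr <= B.

(* Main.v *)
Require Import Defs.
From Stdlib Require Import Reals Lra Psatz.
Open Scope R_scope.

Lemma lim_restrict g D D' l x :
  limit1_in g D l x -> (forall y, D' y -> D y) -> limit1_in g D' l x.
Proof.
  intros H HD eps He. destruct (H eps He) as [alp [Ha Hb]].
  exists alp; split; auto. intros y [Hy1 Hy2]. apply Hb; auto.
Qed.

Lemma lim_le F D l a S :
  limit1_in F D l a ->
  (forall d, 0 < d -> exists y, D y /\ Rabs (y - a) < d /\ F y <= S) -> l <= S.
Proof.
  intros H Hp. destruct (Rle_or_lt l S) as [h|h]; auto.
  destruct (H (l - S)) as [alp [Ha Hb]]; [lra|].
  destruct (Hp alp Ha) as [y [Dy [Hy FS]]].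
  assert (K := Hb y (conj Dy Hy)). simpl in K. unfold R_dist in K.
  apply Rabs_def2 in K. lra.
Qed.

Lemma lim_ge F D l a S :
  limit1_in F D l a ->
  (forall d, 0 < d -> exists y, D y /\ Rabs (y - a) < d /\ S <= F y) -> S <= l.
Proof.
  intros H Hp. destruct (Rle_or_lt S l) as [h|h]; auto.
  destruct (H (S - l)) as [alp [Ha Hb]]; [lra|].
  destruct (Hp alp Ha) as [y [Dy [Hy FS]]].
  assert (K := Hb y (conj Dy Hy)). simpl in K. unfold R_dist in K.
  apply Rabs_def2 in K. lra.
Qed.

Lemma right_pt a b d : a < b -> 0 < d ->
  a < a + Rmin d (b - a) / 2 < b /\ Rabs (a + Rmin d (b - a) / 2 - a) < d.
Proof.
  intros. pose proof (Rmin_l d (b-a)). pose proof (Rmin_r d (b-a)).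
  assert (0 < Rmin d (b-a)) by (apply Rmin_glb_lt; lra).
  split; [lra|]. rewrite Rabs_right; lra.
Qed.

Lemma left_pt a b d : a < b -> 0 < d ->
  a < b - Rmin d (b - a) / 2 < b /\ Rabs (b - Rmin d (b - a) / 2 - b) < d.
Proof.
  intros. pose proof (Rmin_l d (b-a)). pose proof (Rmin_r d (b-a)).
  assert (0 < Rmin d (b-a)) by (apply Rmin_glb_lt; lra).
  split; [lra|]. rewrite Rabs_left; lra.
Qed.

Lemma div_le_iff u v p q : 0 < p -> 0 < q -> u * q <= v * p -> u / p <= v / q.
Proof.
  intros Hp Hq H.
  replace (u / p) with ((u * q) * / (p * q)) by (field; lra).
  replace (v / q) with ((v * p) * / (p * q)) by (field; lra).
  apply Rmult_le_compat_r; auto. left; apply Rinv_0_lt_compat; nra.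
Qed.

Lemma convex_deriv_mono g dg :
  convex_on (fun v => 0 < v) g ->
  (forall x, 0 < x -> has_deriv_within (fun v => 0 < v) g x (dg x)) ->
  forall a b, 0 < a -> a < b -> dg a <= dg b.
Proof.
  intros Hc Hd a b Ha Hab.
  assert (Hcv : forall y, a < y < b ->
     g y <= ((b - y)/(b-a)) * g a + (1 - (b-y)/(b-a)) * g b).
  { intros y Hy. set (t := (b - y)/(b-a)).
    assert (Ht : t * (b - a) = b - y) by (unfold t; field; lra).
    assert (0 <= t <= 1).
    { clearbody t. split; nra. }
    replace y with (t * a + (1 - t) * b) at 1 by nra.
    apply Hc; lra. }
  apply Rle_trans with ((g b - g a)/(b - a)).
  - apply (lim_le _ _ _ _ _ (Hd a Ha)). intros d Hd0.
    destruct (right_pt a b d Hab Hd0) as [Hy1 Hy2].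
    set (y := a + Rmin d (b - a) / 2) in *.
    exists y. split; [split; lra|]. split; auto.
    apply div_le_iff; try lra.
    assert (K := Hcv y Hy1). set (t := (b - y)/(b-a)) in *.
    assert (Ht : t * (b - a) = b - y) by (unfold t; field; lra). nra.
  - apply (lim_ge _ _ _ _ _ (Hd b ltac:(lra))). intros d Hd0.
    destruct (left_pt a b d Hab Hd0) as [Hy1 Hy2].
    set (y := b - Rmin d (b - a) / 2) in *.
    exists y. split; [split; lra|]. split; auto.
    replace ((g y - g b) / (y - b)) with ((g b - g y) / (b - y)) by (field; lra).
    apply div_le_iff; try lra.
    assert (K := Hcv y Hy1). set (t := (b - y)/(b-a)) in *.
    assert (Ht : t * (b - a) = b - y) by (unfold t; field; lra). nra.
Qed.

Lemma mono_deriv_nonneg dg ddg x :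
  (forall a b, 0 < a -> a < b -> dg a <= dg b) ->
  has_deriv_within (fun v => 0 < v) dg x ddg -> 0 < x -> 0 <= ddg.
Proof.
  intros Hm Hd Hx. apply (lim_ge _ _ _ _ _ Hd). intros d Hd0.
  exists (x + d/2). split; [split; lra|]. split.
  - rewrite Rabs_right; lra.
  - apply Rmult_le_pos. assert (dg x <= dg (x + d/2)) by (apply Hm; lra). lra.
    left; apply Rinv_0_lt_compat; lra.
Qed.

Lemma strict_convex_convex g :
  strictly_convex_on (fun v => 0 < v) g -> convex_on (fun v => 0 < v) g.
Proof.
  intros H x y t Hx Hy Ht.
  destruct (Req_dec x y) as [->|Hne].
  { replace (t * y + (1 - t) * y) with y by ring. lra. }
  destruct (Req_dec t 0) as [->|H0].
  { replace (0 * x + (1 - 0) * y) with y by ring. lra. }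
  destruct (Req_dec t 1) as [->|H1].
  { replace (1 * x + (1 - 1) * y) with x by ring. lra. }
  left. apply H; auto. lra.
Qed.

Lemma deriv_interior D g x l :
  has_deriv_within D g x l ->
  (exists d, 0 < d /\ forall y, Rabs (y - x) < d -> D y) ->
  derivable_pt_lim g x l.
Proof.
  intros H [d [Hd HD]] eps He.
  destruct (H eps He) as [alp [Ha Hb]].
  assert (Hm : 0 < Rmin alp d) by (apply Rmin_glb_lt; lra).
  exists (mkposreal _ Hm). intros h Hh Hlt. simpl in Hlt.
  pose proof (Rmin_l alp d). pose proof (Rmin_r alp d).
  assert (K := Hb (x + h)). simpl in K. unfold R_dist in K.
  replace (x + h - x) with h in K by ring.
  apply K. split; [split|].
  - apply HD. replace (x + h - x) with h by ring. lra.
  - intro E. apply Hh. lra.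
  - lra.
Qed.

Lemma deriv_cont D g x l :
  has_deriv_within D g x l -> limit1_in g D (g x) x.
Proof.
  intros H eps He.
  destruct (H 1 ltac:(lra)) as [alp [Ha Hb]].
  set (K := Rabs l + 1).
  assert (HK : 0 < K) by (unfold K; pose proof (Rabs_pos l); lra).
  assert (Hm : 0 < Rmin alp (eps / K)).
  { apply Rmin_glb_lt; auto. apply Rdiv_lt_0_compat; lra. }
  exists (Rmin alp (eps / K)). split; [lra|].
  intros y [Dy Hy]. simpl in Hy |- *. unfold R_dist in Hy |- *.
  pose proof (Rmin_l alp (eps/K)). pose proof (Rmin_r alp (eps/K)).
  destruct (Req_dec y x) as [->|Hne].
  { replace (g x - g x) with 0 by ring. rewrite Rabs_R0. lra. }
  assert (Hya : dist R_met y x < alp) by (simpl; unfold R_dist; lra).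
  assert (Q := Hb y (conj (conj Dy Hne) Hya)). simpl in Q. unfold R_dist in Q.
  replace (g y - g x) with ((g y - g x) / (y - x) * (y - x)) by (field; lra).
  rewrite Rabs_mult.
  assert (Rabs ((g y - g x) / (y - x)) < K).
  { unfold K. pose proof (Rabs_triang_inv ((g y - g x) / (y - x)) l). lra. }
  assert (Rabs (y - x) * K < eps).
  { apply (Rmult_lt_reg_r (/ K)). apply Rinv_0_lt_compat; lra.
    replace (Rabs (y - x) * K * / K) with (Rabs (y - x)) by (field; lra). lra. }
  pose proof (Rabs_pos (y - x)). pose proof (Rabs_pos ((g y - g x) / (y - x))).
  nra.
Qed.

Lemma neg_deriv_pt w p l y :
  derivable_pt_lim w p l -> l < 0 -> y < p -> exists t, y <= t < p /\ w p < w t.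
Proof.
  intros H Hl Hy. destruct (H (- l) ltac:(lra)) as [del Hd].
  set (h := - (Rmin del (p - y) / 2)).
  assert (Hm : 0 < Rmin del (p - y)) by (apply Rmin_glb_lt; [apply cond_pos|lra]).
  pose proof (Rmin_l del (p-y)). pose proof (Rmin_r del (p-y)).
  assert (Hh : h <> 0) by (unfold h; lra).
  assert (Hh2 : Rabs h < del) by (unfold h; rewrite Rabs_left; lra).
  assert (K := Hd h Hh Hh2). apply Rabs_def2 in K.
  exists (p + h). split; [unfold h; lra|].
  destruct K as [K1 K2].
  assert (Q : (w (p + h) - w p) / h < 0) by lra.
  assert (hneg : h < 0) by (unfold h; lra).
  destruct (Rle_or_lt (w (p+h)) (w p)) as [E|E]; auto.
  exfalso. assert (0 <= (w (p + h) - w p) / h).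
  { replace ((w (p + h) - w p) / h) with ((w p - w (p+h)) / (- h)) by (field; lra).
    apply Rmult_le_pos; [lra|]. left; apply Rinv_0_lt_compat; lra. } lra.
Qed.

Lemma barrier_up w dw c x :
  0 < x < 1 ->
  (forall y, 0 < y < 1 -> derivable_pt_lim w y (dw y)) ->
  (forall y, 0 < y < 1 -> c < w y -> dw y < 0) ->
  c < w x -> forall y, 0 < y <= x -> w x <= w y.
Proof.
  intros Hx Hd Hn Hc y Hy.
  destruct (Req_dec y x) as [->|Hne]; [lra|].
  destruct (continuity_ab_maj w y x ltac:(lra)) as [p [Hp1 Hp2]].
  { intros z Hz. apply derivable_continuous_pt.
    exists (dw z). apply Hd. lra. }
  destruct (Req_dec p y) as [->|Hpy].
  { apply Hp1; lra. }
  assert (Hwp : w x <= w p) by (apply Hp1; lra).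
  destruct (neg_deriv_pt w p (dw p) y) as [t [Ht1 Ht2]].
  - apply Hd; lra.
  - apply Hn; lra.
  - lra.
  - assert (w t <= w p) by (apply Hp1; lra). lra.
Qed.

Lemma barrier_down w dw c x :
  0 < x < 1 ->
  (forall y, 0 < y < 1 -> derivable_pt_lim w y (dw y)) ->
  (forall y, 0 < y < 1 -> w y < c -> 0 < dw y) ->
  w x < c -> forall y, 0 < y <= x -> w y <= w x.
Proof.
  intros Hx Hd Hn Hc y Hy.
  assert (K := barrier_up (fun z => - w z) (fun z => - dw z) (- c) x Hx).
  cut (- w x <= - w y); [lra|]. apply K; [| | |exact Hy].
  - intros z Hz. apply (derivable_pt_lim_opp w z (dw z)). auto.
  - intros z Hz H. assert (0 < dw z) by (apply Hn; lra). lra.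
  - lra.
Qed.

Lemma lim0_lower r D A rho :
  limit1_in r D 0 0 -> 0 < rho -> 0 < A ->
  (forall e, 0 < e < rho -> D e) ->
  (forall e, 0 < e < rho -> A * (rho - e) + r e <= r rho) -> A * rho <= r rho.
Proof.
  intros Hl Hr HA HD Hb.
  destruct (Rle_or_lt (A * rho) (r rho)) as [h|h]; auto. exfalso.
  set (e := A * rho - r rho).
  destruct (Hl (e/2)) as [alp [Ha Hc]]; [unfold e; lra|].
  set (m := Rmin (Rmin alp rho) (e / (2 * A))).
  assert (Hm : 0 < m).
  { unfold m. apply Rmin_glb_lt; [apply Rmin_glb_lt; lra|].
    apply Rdiv_lt_0_compat; unfold e; lra. }
  assert (m <= Rmin alp rho) by apply Rmin_l.
  assert (m <= e / (2*A)) by apply Rmin_r.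
  pose proof (Rmin_l alp rho). pose proof (Rmin_r alp rho).
  assert (HAm : A * m <= e / 2).
  { replace (e/2) with (A * (e / (2*A))) by (field; lra). nra. }
  assert (Hdd : dist R_met (m/2) 0 < alp).
  { simpl. unfold R_dist. rewrite Rminus_0_r, Rabs_right; lra. }
  assert (K := Hc (m/2) (conj (HD (m/2) ltac:(lra)) Hdd)).
  simpl in K. unfold R_dist in K. rewrite Rminus_0_r in K. apply Rabs_def2 in K.
  assert (K2 := Hb (m/2) ltac:(lra)). unfold e in *. nra.
Qed.

Lemma lim0_upper r D A rho :
  limit1_in r D 0 0 -> 0 < rho -> 0 <= A ->
  (forall e, 0 < e < rho -> D e) ->
  (forall e, 0 < e < rho -> r rho <= A * (rho - e) + r e) -> r rho <= A * rho.
Proof.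
  intros Hl Hr HA HD Hb.
  destruct (Rle_or_lt (r rho) (A * rho)) as [h|h]; auto. exfalso.
  set (e := r rho - A * rho).
  destruct (Hl (e/2)) as [alp [Ha Hc]]; [unfold e; lra|].
  set (m := Rmin alp rho).
  assert (Hm : 0 < m) by (unfold m; apply Rmin_glb_lt; lra).
  pose proof (Rmin_l alp rho). pose proof (Rmin_r alp rho).
  assert (Hdd : dist R_met (m/2) 0 < alp).
  { simpl. unfold R_dist. rewrite Rminus_0_r, Rabs_right; unfold m in *; lra. }
  assert (K := Hc (m/2) (conj (HD (m/2) ltac:(unfold m in *; lra)) Hdd)).
  simpl in K. unfold R_dist in K. rewrite Rminus_0_r in K. apply Rabs_def2 in K.
  assert (K2 := Hb (m/2) ltac:(unfold m in *; lra)). unfold e in *. nra.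
Qed.

Lemma deriv_neg_right D g a l :
  has_deriv_within D g a l -> l < 0 -> forall b, a < b ->
  (forall u, a < u < b -> D u) -> exists u, a < u <= b /\ g u < g a.
Proof.
  intros H Hl b Hab HD.
  destruct (H (- l) ltac:(lra)) as [alp [Ha Hb]].
  destruct (right_pt a b alp Hab Ha) as [Hu1 Hu2].
  set (u := a + Rmin alp (b - a) / 2) in *.
  assert (Hd : dist R_met u a < alp) by (simpl; unfold R_dist; lra).
  assert (Hne : u <> a) by (intro; lra).
  assert (K := Hb u (conj (conj (HD u Hu1) Hne) Hd)).
  simpl in K. unfold R_dist in K. apply Rabs_def2 in K.
  exists u. split; [lra|].
  assert (Q : (g u - g a) / (u - a) < 0) by lra.
  assert (E : g u - g a = (g u - g a) / (u - a) * (u - a)) by (field; lra).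
  set (q := (g u - g a) / (u - a)) in *. nra.
Qed.

Lemma deriv_neg_left D g a l :
  has_deriv_within D g a l -> l < 0 -> forall b, b < a ->
  (forall u, b < u < a -> D u) -> exists u, b <= u < a /\ g a < g u.
Proof.
  intros H Hl b Hab HD.
  destruct (H (- l) ltac:(lra)) as [alp [Ha Hb]].
  destruct (left_pt b a alp Hab Ha) as [Hu1 Hu2].
  set (u := a - Rmin alp (a - b) / 2) in *.
  assert (Hd : dist R_met u a < alp) by (simpl; unfold R_dist; lra).
  assert (Hne : u <> a) by (intro; lra).
  assert (K := Hb u (conj (conj (HD u Hu1) Hne) Hd)).
  simpl in K. unfold R_dist in K. apply Rabs_def2 in K.
  exists u. split; [lra|].
  assert (Q : (g u - g a) / (u - a) < 0) by lra.
  assert (E : g u - g a = (g u - g a) / (u - a) * (u - a)) by (field; lra).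
  set (q := (g u - g a) / (u - a)) in *. nra.
Qed.

Lemma ln_le' x y : 0 < x -> x <= y -> ln x <= ln y.
Proof.
  intros Hx Hxy. destruct (Rle_lt_or_eq_dec _ _ Hxy) as [h| ->].
  - left; apply ln_increasing; auto.
  - lra.
Qed.

Lemma div_le_mul a b c : 0 < b -> a / b <= c -> a <= c * b.
Proof.
  intros Hb H. replace a with (a / b * b) by (field; lra).
  apply Rmult_le_compat_r; lra.
Qed.

Lemma mul_le_div a b c : 0 < b -> c <= a / b -> c * b <= a.
Proof.
  intros Hb H. replace a with (a / b * b) by (field; lra).
  apply Rmult_le_compat_r; lra.
Qed.

Lemma small_ln x C a : 0 < x -> 0 < a -> exists rho, 0 < rho <= x /\ C < a * (- ln rho).
Proof.
  intros Hx Ha. set (T := Rmax (- ln x) (C / a + 1)).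
  exists (exp (- T)). split; [split|].
  - apply exp_pos.
  - assert (- T <= ln x) by (unfold T; pose proof (Rmax_l (- ln x) (C/a+1)); lra).
    destruct (Rle_lt_or_eq_dec _ _ H) as [h|h].
    + left. rewrite <- (exp_ln x Hx). apply exp_increasing; auto.
    + rewrite h, exp_ln; lra.
  - rewrite ln_exp. assert (C / a + 1 <= T) by apply Rmax_r.
    assert (a * (C / a + 1) <= a * T) by (apply Rmult_le_compat_l; lra).
    replace (a * (C / a + 1)) with (C + a) in * by (field; lra). lra.
Qed.

Theorem corollary4p3
  (n : nat) (hn : (2 <= n)%nat)
  (kappa f df : R -> R)
  (phi dphi ddphi : R -> R) (h dh ddh : R -> R)
  (t0 : R) (q1 q0 dq1 dq0 : R -> R)
  (mu0 mu1 lambda : R) (r dr ddr : R -> R)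
  (* setting: kappa continuous on [0,oo); f'' + kappa f = 0, f(0)=0, f'(0)=1 *)
  (Hkappa : forall x, 0 <= x -> cont_within (fun y => 0 <= y) kappa x)
  (Hf : C1_on (fun y => 0 <= y) f df)
  (Hdf : forall x, 0 <= x -> has_deriv_within (fun y => 0 <= y) df x (- kappa x * f x))
  (Hf0 : f 0 = 0) (Hdf0 : df 0 = 1)
  (Hmup : mu_plus_inf_le_1 kappa)
  (Hmum : mu_minus_inf_finite kappa)
  (* (A1) *)
  (HA1a : C2_on (fun v => 0 < v) h dh ddh)
  (HA1b : strictly_convex_on (fun v => 0 < v) h)
  (* (A4) *)
  (HA4a : C2_on (fun v => 0 < v) phi dphi ddphi)
  (HA4b : forall v, 0 < v -> 0 < phi v)
  (HA4c : convex_on (fun v => 0 < v) phi)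
  (* (A5) *)
  (HA5 : forall v w, 0 < v -> v < w -> v * dphi v < w * dphi w)
  (* (A6) *)
  (HA6t0 : 0 <= t0)
  (HA6phi : (0 < t0 /\ dphi t0 = 0) \/
            (t0 = 0 /\ limit1_in dphi (fun v => 0 < v) 0 0))
  (HA6q1 : forall s, 1 <= s ->
      is_lub (fun z => exists v, t0 < v /\ z = dphi v / dphi (s * v)) (q1 s))
  (HA6q0 : forall s, 0 < s <= 1 ->
      is_glb (fun z => exists v, t0 / s < v /\ z = dphi v / dphi (s * v)) (q0 s))
  (HA6q1C1 : C1_on (fun s => 1 <= s) q1 dq1)
  (HA6q0C1 : C1_on (fun s => 0 < s <= 1) q0 dq0)
  (HA6q1lim : forall eps, 0 < eps -> exists M, forall s, M < s -> Rabs (q1 s) < eps)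
  (HA6q0lim : forall M, exists d, 0 < d /\ forall s, 0 < s < d -> M < q0 s)
  (HA6dq1 : forall s, 1 <= s -> dq1 s < 0)
  (HA6dq0 : forall s, 0 < s <= 1 -> dq0 s < 0)
  (* bounds on f *)
  (Hmu : 0 < mu0 <= mu1)
  (Hfb1 : forall x, 0 <= x -> mu0 <= df x <= mu1)
  (Hfb2 : forall x, 0 <= x -> mu0 * x <= f x <= mu1 * x)
  (* r is a regular equilibrium solution with r(1) = lambda > 0 *)
  (Hlam : 0 < lambda)
  (Hr1 : C1_on (fun x => 0 < x <= 1) r dr)
  (Hr2 : forall x, 0 < x < 1 -> derivable_pt_lim dr x (ddr x))
  (Hrpos : forall x, 0 < x <= 1 -> 0 < dr x)
  (Hreg : limit1_in r (fun x => 0 < x <= 1) 0 0)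
  (Hrlam : r 1 = lambda)
  (Hode : forall x, 0 < x < 1 ->
     let tau := f (r x) / f x in
     f x * (ddphi (dr x) + ddh (dr x * tau ^ (n - 1)) * tau ^ (2 * (n - 1))) * ddr x
     = (INR n - 1) * (df (r x) * dphi tau - df x * dphi (dr x))
       - (INR n - 1) * (df (r x) * dr x - df x * tau)
         * ddh (dr x * tau ^ (n - 1)) * dr x * tau ^ (2 * n - 3)) :
  forall s0 s1, 0 < s0 <= 1 -> q0 s0 = mu1 / mu0 ->
                1 <= s1 -> q1 s1 = mu0 / mu1 ->
  let eta0 := Rmin (mu0 / mu1) s0 in
  let eta1 := Rmax (mu1 / mu0) s1 in
  forall x, 0 < x <= 1 ->
    eta0 * (f (r x) / f x) <= dr x <= eta1 * (f (r x) / f x).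
Proof.
  intros s0 s1 Hs0 Hq0s0 Hs1 Hq1s1 eta0 eta1.
  set (D01 := fun x => 0 < x <= 1).
  assert (Fr : forall y, 0 < y < 1 -> derivable_pt_lim r y (dr y)).
  { intros y Hy. apply (deriv_interior D01). apply (proj1 Hr1). unfold D01; lra.
    exists (Rmin y (1 - y)). split. apply Rmin_glb_lt; lra.
    intros z Hz. pose proof (Rmin_l y (1-y)). pose proof (Rmin_r y (1-y)).
    apply Rabs_def2 in Hz. unfold D01; lra. }
  assert (Ff : forall z, 0 < z -> derivable_pt_lim f z (df z)).
  { intros z Hz. apply (deriv_interior (fun y => 0 <= y)). apply (proj1 Hf). lra.
    exists z. split; auto. intros u Hu. apply Rabs_def2 in Hu. lra. }
  destruct HA4a as [[Hphi1 _] [Hdphi1 _]].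
  destruct HA1a as [[Hh1 _] [Hdh1 _]].
  assert (Mphi : forall a b, 0 < a -> a < b -> dphi a <= dphi b).
  { apply (convex_deriv_mono phi); auto. }
  assert (Mphi' : forall a b, 0 < a -> a <= b -> dphi a <= dphi b).
  { intros a b Ha Hab. destruct (Rle_lt_or_eq_dec _ _ Hab) as [h'| ->]; [apply Mphi; auto|lra]. }
  assert (Pphi : forall v, 0 < v -> 0 <= ddphi v).
  { intros v Hv. apply (mono_deriv_nonneg dphi (ddphi v) v Mphi); auto. }
  assert (Mh : forall a b, 0 < a -> a < b -> dh a <= dh b).
  { apply (convex_deriv_mono h); auto. apply strict_convex_convex; auto. }
  assert (Ph : forall v, 0 < v -> 0 <= ddh v).
  { intros v Hv. apply (mono_deriv_nonneg dh (ddh v) v Mh); auto. }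
  assert (Sphi : forall v, 0 < v -> (v <= t0 -> dphi v <= 0) /\ (t0 < v -> 0 < dphi v)).
  { destruct HA6phi as [[Ht0 Hd0] | [Ht0 Hlim]].
    - intros v Hv. split; intro Hvt.
      + destruct (Rle_lt_or_eq_dec _ _ Hvt) as [h'| ->]; [|lra].
        assert (K := HA5 v t0 Hv h'). rewrite Hd0 in K. nra.
      + assert (K := HA5 t0 v Ht0 Hvt). rewrite Hd0 in K. nra.
    - subst t0.
      assert (Hl : limit1_in (fun x => x * dphi x) (fun v => 0 < v) 0 0).
      { replace 0 with (0 * 0) at 1 by ring. apply limit_mul; auto. apply lim_x. }
      assert (Hnn : forall u, 0 < u -> 0 <= u * dphi u).
      { intros u Hu. apply (lim_le _ _ _ _ _ Hl). intros d Hd.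
        destruct (right_pt 0 u d Hu Hd) as [Hy1 Hy2].
        eexists; split; [|split; [exact Hy2|]]. simpl; lra.
        left. apply HA5; lra. }
      intros v Hv. split; intro Hvt; [lra|].
      assert (K := HA5 (v/2) v ltac:(lra) ltac:(lra)).
      assert (K2 := Hnn (v/2) ltac:(lra)). nra. }
  assert (Rmono : forall a b, 0 < a -> a < b -> b < 1 -> r a < r b).
  { intros a b Ha Hab Hb. destruct (MVT_cor2 r dr a b Hab) as [c [Hc1 Hc2]].
    { intros c Hc. apply Fr; lra. }
    assert (0 < dr c) by (apply Hrpos; lra). nra. }
  assert (Rnn : forall y, 0 < y < 1 -> 0 <= r y).
  { intros y Hy. apply (lim_le _ _ _ _ _ Hreg). intros d Hd.
    destruct (right_pt 0 y d ltac:(lra) Hd) as [Hy1 Hy2].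
    eexists; split; [|split; [exact Hy2|]]. simpl; lra.
    left. apply Rmono; lra. }
  assert (Rpos : forall y, 0 < y <= 1 -> 0 < r y).
  { intros y Hy. destruct (Req_dec y 1) as [->|Hne]; [lra|].
    assert (0 <= r (y/2)) by (apply Rnn; lra).
    assert (r (y/2) < r y) by (apply Rmono; lra). lra. }
  assert (Fpos : forall z, 0 < z -> 0 < f z).
  { intros z Hz. destruct (Hfb2 z ltac:(lra)). nra. }
  set (tau := fun y => f (r y) / f y).
  set (w := fun y => dr y / tau y).
  set (tp := fun y => (df (r y) * dr y * f y - df y * f (r y)) / (f y)²).
  set (dw := fun y => (ddr y * tau y - tp y * dr y) / (tau y)²).
  assert (Tpos : forall y, 0 < y <= 1 -> 0 < tau y).
  { intros y Hy. unfold tau. apply Rdiv_lt_0_compat; apply Fpos; [apply Rpos; auto|lra]. }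
  assert (Dw : forall y, 0 < y < 1 -> derivable_pt_lim w y (dw y)).
  { intros y Hy.
    assert (Ht : derivable_pt_lim (comp f r / f)%F y
       (((df (r y) * dr y) * f y - df y * comp f r y) / (f y)²)).
    { apply derivable_pt_lim_div.
      - apply derivable_pt_lim_comp; auto. apply Ff, Rpos; lra.
      - apply Ff; lra.
      - assert (0 < f y) by (apply Fpos; lra). lra. }
    assert (K : derivable_pt_lim (dr / tau)%F y ((ddr y * tau y - tp y * dr y) / (tau y)²)).
    { apply derivable_pt_lim_div. apply Hr2; lra. exact Ht.
      assert (0 < tau y) by (apply Tpos; lra). lra. }
    exact K. }
  assert (Hmu01 : 0 < mu0 / mu1) by (apply Rdiv_lt_0_compat; lra).
  assert (Hmu10 : 0 < mu1 / mu0) by (apply Rdiv_lt_0_compat; lra).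
  assert (Q1 : forall s, s1 < s -> forall T, 0 < T -> t0 < T ->
                 dphi T < (mu0 / mu1) * dphi (s * T)).
  { intros s Hs T HT HtT.
    destruct (deriv_neg_right _ q1 s1 (dq1 s1) (proj1 HA6q1C1 s1 Hs1) (HA6dq1 s1 Hs1) s Hs)
      as [s' [Hs'1 Hs'2]].
    { intros u Hu; lra. }
    assert (Hlub := proj1 (HA6q1 s' ltac:(lra)) (dphi T / dphi (s' * T))
                     (ex_intro _ T (conj HtT eq_refl))).
    assert (HpT : 0 < dphi T) by (apply Sphi; auto).
    assert (Hp' : 0 < dphi (s' * T)) by (apply Sphi; nra).
    assert (Hps : dphi (s' * T) <= dphi (s * T)) by (apply Mphi'; nra).
    assert (K := div_le_mul _ _ _ Hp' Hlub).
    assert (Hq : 0 < q1 s').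
    { assert (0 < dphi T / dphi (s' * T)) by (apply Rdiv_lt_0_compat; auto). lra. }
    rewrite Hq1s1 in Hs'2. nra. }
  assert (Q0 : forall s, 0 < s < s0 -> forall T, 0 < T -> t0 < s * T ->
                 (mu1 / mu0) * dphi (s * T) < dphi T).
  { intros s Hs T HT HtT.
    destruct (deriv_neg_left _ q0 s0 (dq0 s0) (proj1 HA6q0C1 s0 Hs0) (HA6dq0 s0 Hs0) s
      ltac:(lra)) as [s' [Hs'1 Hs'2]].
    { intros u Hu; lra. }
    assert (Ht' : t0 / s' < T).
    { apply (Rmult_lt_reg_r s'); [lra|]. replace (t0 / s' * s') with t0 by (field; lra). nra. }
    assert (Hglb := proj1 (HA6q0 s' ltac:(lra)) (dphi T / dphi (s' * T))
                     (ex_intro _ T (conj Ht' eq_refl))).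
    assert (Hps0 : 0 < dphi (s * T)) by (apply Sphi; nra).
    assert (Hps : dphi (s * T) <= dphi (s' * T)) by (apply Mphi'; nra).
    assert (K := mul_le_div (dphi T) (dphi (s' * T)) (q0 s') ltac:(lra) Hglb).
    rewrite Hq0s0 in Hs'2. nra. }
  assert (KU : forall y, 0 < y < 1 -> eta1 < w y -> ddr y < 0 /\ dw y < 0).
  { intros y Hy Hw.
    assert (Hn2 : 2 <= INR n) by (apply (le_INR 2 n) in hn; simpl in hn; lra).
    assert (HO := Hode y Hy). cbv zeta in HO.
    change (f (r y) / f y) with (tau y) in HO.
    assert (HT : 0 < tau y) by (apply Tpos; lra).
    assert (HD : 0 < dr y) by (apply Hrpos; lra).
    assert (HR : 0 < r y) by (apply Rpos; lra).
    assert (HY : 0 < f y) by (apply Fpos; lra).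
    assert (HfR : f (r y) = tau y * f y) by (unfold tau; field; lra).
    assert (HDs : dr y = w y * tau y) by (unfold w; field; lra).
    assert (Htp : tp y = (df (r y) * dr y - df y * tau y) / f y).
    { unfold tp. rewrite HfR. unfold Rsqr. field. lra. }
    destruct (Hfb1 (r y) ltac:(lra)) as [HdR1 HdR2].
    destruct (Hfb1 y ltac:(lra)) as [Hdy1 Hdy2].
    assert (HP := Pphi (dr y) HD).
    set (T := tau y) in *. set (D := dr y) in *. set (s := w y) in *.
    set (E := ddh (D * T ^ (n - 1))) in *.
    assert (HE : 0 <= E) by (apply Ph; apply Rmult_lt_0_compat; auto; apply pow_lt; auto).
    assert (Hp1 := pow_lt T (2 * (n - 1)) HT).
    assert (Hp2 := pow_lt T (2 * n - 3) HT).
    set (p1 := T ^ (2 * (n - 1))) in *. set (p2 := T ^ (2 * n - 3)) in *.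
    set (A := df (r y) * D - df y * T) in *.
    set (B := df (r y) * dphi T - df y * dphi D) in *.
    assert (HC : 0 <= f y * (ddphi D + E * p1)).
    { apply Rmult_le_pos; [lra|]. apply Rplus_le_le_0_compat; auto.
      apply Rmult_le_pos; lra. }

    assert (He1 : mu1 / mu0 <= eta1) by apply Rmax_l.
    assert (He2 : s1 <= eta1) by apply Rmax_r.
    assert (Hms : mu1 < mu0 * s).
    { assert (mu1 / mu0 < s) by lra.
      replace mu1 with (mu1 / mu0 * mu0) by (field; lra). nra. }
    assert (Hs1' : 1 <= mu1 / mu0).
    { replace 1 with (mu0 / mu0) by (field; lra). apply Rmult_le_compat_r; [|lra].
      left; apply Rinv_0_lt_compat; lra. }
    assert (HB : B < 0).
    { unfold B. destruct (Rlt_or_le t0 T) as [HtT|HtT].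
      - assert (K := Q1 s ltac:(lra) T HT HtT). rewrite <- HDs in K.
        assert (0 < dphi D) by (apply Sphi; nra).
        assert (0 < dphi T) by (apply Sphi; auto).
        assert (mu1 * (mu0 / mu1 * dphi D) = mu0 * dphi D) by (field; lra).
        nra.
      - destruct (Rlt_or_le t0 D) as [HtD|HtD].
        + assert (0 < dphi D) by (apply Sphi; auto).
          assert (dphi T <= 0) by (apply Sphi; auto). nra.
        + assert (dphi D <= 0) by (apply Sphi; auto).
          assert (K := HA5 T D HT ltac:(nra)).
          assert (K1 : T * (dphi T - s * dphi D) < 0).
          { replace (T * (dphi T - s * dphi D)) with (T * dphi T - D * dphi D)
              by (rewrite HDs; ring). lra. }
          assert (K2 : dphi T < s * dphi D).
          { destruct (Rlt_or_le (dphi T - s * dphi D) 0); [lra|nra]. }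
          assert (L1 : df (r y) * dphi T < df (r y) * (s * dphi D))
            by (apply Rmult_lt_compat_l; lra).
          assert (L2 : 0 <= (df (r y) * s - df y) * (- dphi D))
            by (apply Rmult_le_pos; nra).
          nra. }
    assert (HA : 0 < A) by (unfold A; rewrite HDs; nra).
    assert (H1 : (INR n - 1) * B < 0) by nra.
    assert (H2 : 0 <= (INR n - 1) * A * E * D * p2).
    { repeat apply Rmult_le_pos; lra. }
    assert (Hddr : ddr y < 0).
    { destruct (Rlt_or_le (ddr y) 0) as [h'|h']; auto.
      assert (0 <= f y * (ddphi D + E * p1) * ddr y) by (apply Rmult_le_pos; auto).
      lra. }
    split; auto.
    assert (Htp0 : 0 < tp y) by (rewrite Htp; apply Rdiv_lt_0_compat; auto).
    unfold dw. fold T. fold D. apply Rdiv_neg_pos.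
    - nra.
    - unfold Rsqr; nra. }

  assert (KL : forall y, 0 < y < 1 -> w y < eta0 -> 0 < ddr y /\ 0 < dw y).
  { intros y Hy Hw.
    assert (Hn2 : 2 <= INR n) by (apply (le_INR 2 n) in hn; simpl in hn; lra).
    assert (HO := Hode y Hy). cbv zeta in HO.
    change (f (r y) / f y) with (tau y) in HO.
    assert (HT : 0 < tau y) by (apply Tpos; lra).
    assert (HD : 0 < dr y) by (apply Hrpos; lra).
    assert (HR : 0 < r y) by (apply Rpos; lra).
    assert (HY : 0 < f y) by (apply Fpos; lra).
    assert (HfR : f (r y) = tau y * f y) by (unfold tau; field; lra).
    assert (HDs : dr y = w y * tau y) by (unfold w; field; lra).
    assert (Htp : tp y = (df (r y) * dr y - df y * tau y) / f y).
    { unfold tp. rewrite HfR. unfold Rsqr. field. lra. }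
    destruct (Hfb1 (r y) ltac:(lra)) as [HdR1 HdR2].
    destruct (Hfb1 y ltac:(lra)) as [Hdy1 Hdy2].
    assert (HP := Pphi (dr y) HD).
    set (T := tau y) in *. set (D := dr y) in *. set (s := w y) in *.
    set (E := ddh (D * T ^ (n - 1))) in *.
    assert (HE : 0 <= E) by (apply Ph; apply Rmult_lt_0_compat; auto; apply pow_lt; auto).
    assert (Hp1 := pow_lt T (2 * (n - 1)) HT).
    assert (Hp2 := pow_lt T (2 * n - 3) HT).
    set (p1 := T ^ (2 * (n - 1))) in *. set (p2 := T ^ (2 * n - 3)) in *.
    set (A := df (r y) * D - df y * T) in *.
    set (B := df (r y) * dphi T - df y * dphi D) in *.
    assert (HC : 0 <= f y * (ddphi D + E * p1)).
    { apply Rmult_le_pos; [lra|]. apply Rplus_le_le_0_compat; auto.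
      apply Rmult_le_pos; lra. }

    assert (He1 : eta0 <= mu0 / mu1) by apply Rmin_l.
    assert (He2 : eta0 <= s0) by apply Rmin_r.
    assert (Hspos : 0 < s) by (unfold s, w; apply Rdiv_lt_0_compat; auto).
    assert (Hms : mu1 * s < mu0).
    { assert (s < mu0 / mu1) by lra.
      assert (mu1 * s < mu1 * (mu0 / mu1)) by (apply Rmult_lt_compat_l; lra).
      replace (mu1 * (mu0 / mu1)) with mu0 in * by (field; lra). lra. }
    assert (Hsl1 : s < 1).
    { assert (mu1 * s < mu1) by lra. nra. }
    assert (HB : 0 < B).
    { unfold B. destruct (Rlt_or_le t0 D) as [HtD|HtD].
      - assert (K := Q0 s ltac:(lra) T HT ltac:(rewrite <- HDs; auto)). rewrite <- HDs in K.
        assert (0 < dphi D) by (apply Sphi; auto).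
        assert (mu0 * (mu1 / mu0 * dphi D) = mu1 * dphi D) by (field; lra).
        assert (0 < dphi T) by nra.
        assert (L1 : mu0 * dphi T <= df (r y) * dphi T) by (apply Rmult_le_compat_r; lra).
        assert (L2 : df y * dphi D <= mu1 * dphi D) by (apply Rmult_le_compat_r; lra).
        assert (L3 : mu0 * (mu1 / mu0 * dphi D) < mu0 * dphi T) by (apply Rmult_lt_compat_l; lra).
        lra.
      - assert (dphi D <= 0) by (apply Sphi; auto).
        destruct (Rlt_or_le t0 T) as [HtT|HtT].
        + assert (0 < dphi T) by (apply Sphi; auto). nra.
        + assert (dphi T <= 0) by (apply Sphi; auto).
          assert (K := HA5 D T HD ltac:(nra)).
          assert (K1 : T * (s * dphi D - dphi T) < 0).
          { replace (T * (s * dphi D - dphi T)) with (D * dphi D - T * dphi T)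
              by (rewrite HDs; ring). lra. }
          assert (K2 : s * dphi D < dphi T).
          { destruct (Rlt_or_le (s * dphi D - dphi T) 0); [lra|nra]. }
          assert (L1 : df (r y) * (s * dphi D) < df (r y) * dphi T)
            by (apply Rmult_lt_compat_l; lra).
          assert (L2 : 0 <= (df y - df (r y) * s) * (- dphi D))
            by (apply Rmult_le_pos; nra).
          nra. }
    assert (HA : A < 0) by (unfold A; rewrite HDs; nra).
    assert (H1 : 0 < (INR n - 1) * B) by nra.
    assert (H2 : (INR n - 1) * A * E * D * p2 <= 0).
    { assert (0 <= (INR n - 1) * (- A) * E * D * p2) by (repeat apply Rmult_le_pos; lra).
      nra. }
    assert (Hddr : 0 < ddr y).
    { destruct (Rlt_or_le 0 (ddr y)) as [h'|h']; auto.
      assert (f y * (ddphi D + E * p1) * ddr y <= 0).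
      { assert (0 <= f y * (ddphi D + E * p1) * (- ddr y)) by (apply Rmult_le_pos; lra). nra. }
      lra. }
    split; auto.
    assert (Htp0 : tp y < 0).
    { rewrite Htp. unfold Rdiv. assert (0 < / f y) by (apply Rinv_0_lt_compat; auto). nra. }
    unfold dw. fold T. fold D. apply Rdiv_lt_0_compat.
    - nra.
    - unfold Rsqr; nra. }

  assert (Ltau_lo : forall y, 0 < y <= 1 -> mu0 * r y <= tau y * (mu1 * y)).
  { intros y Hy. assert (HR : 0 < r y) by (apply Rpos; auto).
    destruct (Hfb2 (r y) ltac:(lra)). destruct (Hfb2 y ltac:(lra)).
    assert (0 < f y) by (apply Fpos; lra).
    assert (E : tau y * f y = f (r y)) by (unfold tau; field; lra).
    assert (0 < tau y) by (apply Tpos; auto). nra. }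
  assert (Ltau_hi : forall y, 0 < y <= 1 -> tau y * (mu0 * y) <= mu1 * r y).
  { intros y Hy. assert (HR : 0 < r y) by (apply Rpos; auto).
    destruct (Hfb2 (r y) ltac:(lra)). destruct (Hfb2 y ltac:(lra)).
    assert (0 < f y) by (apply Fpos; lra).
    assert (E : tau y * f y = f (r y)) by (unfold tau; field; lra).
    assert (0 < tau y) by (apply Tpos; auto). nra. }
  assert (Ldr : forall y, 0 < y <= 1 -> dr y = w y * tau y).
  { intros y Hy. assert (0 < tau y) by (apply Tpos; auto). unfold w; field; lra. }
  assert (HL : forall k y, 0 < y < 1 ->
     derivable_pt_lim (fun z => ln (r z) - k * ln z) y (/ r y * dr y - k * / y)).
  { intros k y Hy.
    assert (K : derivable_pt_lim (comp ln r - mult_real_fct k ln)%F y (/ r y * dr y - k * / y)).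
    { apply derivable_pt_lim_minus.
      - apply derivable_pt_lim_comp. apply Fr; auto. apply derivable_pt_lim_ln, Rpos; lra.
      - apply derivable_pt_lim_scal. apply derivable_pt_lim_ln; lra. }
    exact K. }
  assert (MU : forall x, 0 < x < 1 -> w x <= eta1).
  { intros x Hx. destruct (Rle_or_lt (w x) eta1) as [h'|Hc]; auto. exfalso.
    assert (Hb := barrier_up w dw eta1 x Hx Dw (fun y Hy H => proj2 (KU y Hy H)) Hc).
    assert (Hdd : forall y, 0 < y < x -> ddr y < 0).
    { intros y Hy. apply KU; [lra|]. assert (w x <= w y) by (apply Hb; lra). lra. }
    assert (Hdrm : forall y, 0 < y <= x -> dr x <= dr y).
    { intros y Hy. destruct (Req_dec y x) as [->|Hne]; [lra|].
      destruct (MVT_cor2 dr ddr y x ltac:(lra)) as [c [Hc1 Hc2]].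
      { intros c Hc'. apply Hr2; lra. }
      assert (ddr c < 0) by (apply Hdd; lra). nra. }
    assert (Hdx : 0 < dr x) by (apply Hrpos; lra).
    assert (Hrlow : forall rho, 0 < rho <= x -> dr x * rho <= r rho).
    { intros rho Hrho. apply (lim0_lower r D01); auto; try lra.
      - intros e He. unfold D01; lra.
      - intros e He. destruct (MVT_cor2 r dr e rho ltac:(lra)) as [c [Hc1 Hc2]].
        { intros c Hc'. apply Fr; lra. }
        assert (dr x <= dr c) by (apply Hdrm; lra). nra. }
    assert (He1 : mu1 / mu0 <= eta1) by apply Rmax_l.
    set (k := w x * mu0 / mu1).
    assert (Hk : 1 < k).
    { unfold k. assert (mu1 / mu0 < w x) by lra.
      assert (mu1 / mu0 * mu0 < w x * mu0) by (apply Rmult_lt_compat_r; lra).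
      replace (mu1 / mu0 * mu0) with mu1 in * by (field; lra).
      apply (Rmult_lt_reg_r mu1); [lra|]. replace (w x * mu0 / mu1 * mu1) with (w x * mu0) by (field; lra).
      lra. }
    assert (HLm : forall rho, 0 < rho <= x ->
       ln (r rho) - k * ln rho <= ln (r x) - k * ln x).
    { intros rho Hrho. destruct (Req_dec rho x) as [->|Hne]; [lra|].
      destruct (MVT_cor2 (fun z => ln (r z) - k * ln z) (fun y => / r y * dr y - k * / y) rho x ltac:(lra))
        as [c [Hc1 Hc2]].
      { intros c Hc'. apply HL; lra. }
      assert (HRc : 0 < r c) by (apply Rpos; lra).
      assert (Hwc : w x <= w c) by (apply Hb; lra).
      assert (Htc := Ltau_lo c ltac:(lra)).
      assert (HTc : 0 < tau c) by (apply Tpos; lra).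
      assert (Hdc := Ldr c ltac:(lra)).
      assert (Q : k * r c <= dr c * c).
      { rewrite Hdc. unfold k.
        apply (Rmult_le_reg_r mu1); [lra|].
        replace (w x * mu0 / mu1 * r c * mu1) with (w x * (mu0 * r c)) by (field; lra).
        replace (w c * tau c * c * mu1) with (w c * (tau c * (mu1 * c))) by ring.
        assert (0 < w x) by lra.
        apply Rle_trans with (w x * (tau c * (mu1 * c))).
        - apply Rmult_le_compat_l; lra.
        - apply Rmult_le_compat_r; [|lra]. apply Rmult_le_pos; nra. }
      assert (0 <= / r c * dr c - k * / c).
      { replace (/ r c * dr c - k * / c) with ((dr c * c - k * r c) / (r c * c)) by (field; lra).
        apply Rmult_le_pos; [lra|]. left; apply Rinv_0_lt_compat; nra. }
      nra. }
    destruct (small_ln x (ln (r x) - k * ln x - ln (dr x)) (k - 1) ltac:(lra) ltac:(lra))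
      as [rho [Hrho Hbig]].
    assert (K1 := HLm rho Hrho).
    assert (K2 : ln (dr x) + ln rho <= ln (r rho)).
    { rewrite <- ln_mult; auto; [|lra]. apply ln_le'; [|apply Hrlow; auto]. nra. }
    nra. }
  assert (ML : forall x, 0 < x < 1 -> eta0 <= w x).
  { intros x Hx. destruct (Rle_or_lt eta0 (w x)) as [h'|Hc]; auto. exfalso.
    assert (Hb := barrier_down w dw eta0 x Hx Dw (fun y Hy H => proj2 (KL y Hy H)) Hc).
    assert (Hdd : forall y, 0 < y < x -> 0 < ddr y).
    { intros y Hy. apply KL; [lra|]. assert (w y <= w x) by (apply Hb; lra). lra. }
    assert (Hdrm : forall y, 0 < y <= x -> dr y <= dr x).
    { intros y Hy. destruct (Req_dec y x) as [->|Hne]; [lra|].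
      destruct (MVT_cor2 dr ddr y x ltac:(lra)) as [c [Hc1 Hc2]].
      { intros c Hc'. apply Hr2; lra. }
      assert (0 < ddr c) by (apply Hdd; lra). nra. }
    assert (Hdx : 0 < dr x) by (apply Hrpos; lra).
    assert (Hrhi : forall rho, 0 < rho <= x -> r rho <= dr x * rho).
    { intros rho Hrho. apply (lim0_upper r D01); auto; try lra.
      - intros e He. unfold D01; lra.
      - intros e He. destruct (MVT_cor2 r dr e rho ltac:(lra)) as [c [Hc1 Hc2]].
        { intros c Hc'. apply Fr; lra. }
        assert (dr c <= dr x) by (apply Hdrm; lra). nra. }
    assert (He1 : eta0 <= mu0 / mu1) by apply Rmin_l.
    assert (Hwx : 0 < w x).
    { assert (0 < tau x) by (apply Tpos; lra). unfold w; apply Rdiv_lt_0_compat; auto. }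
    set (k := w x * mu1 / mu0).
    assert (Hk : k < 1).
    { unfold k. assert (w x < mu0 / mu1) by lra.
      assert (w x * mu1 < mu0 / mu1 * mu1) by (apply Rmult_lt_compat_r; lra).
      replace (mu0 / mu1 * mu1) with mu0 in * by (field; lra).
      apply (Rmult_lt_reg_r mu0); [lra|]. replace (w x * mu1 / mu0 * mu0) with (w x * mu1) by (field; lra).
      lra. }
    assert (HLm : forall rho, 0 < rho <= x ->
       ln (r x) - k * ln x <= ln (r rho) - k * ln rho).
    { intros rho Hrho. destruct (Req_dec rho x) as [->|Hne]; [lra|].
      destruct (MVT_cor2 (fun z => ln (r z) - k * ln z) (fun y => / r y * dr y - k * / y) rho x ltac:(lra))
        as [c [Hc1 Hc2]].
      { intros c Hc'. apply HL; lra. }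
      assert (HRc : 0 < r c) by (apply Rpos; lra).
      assert (Hwc : w c <= w x) by (apply Hb; lra).
      assert (Htc := Ltau_hi c ltac:(lra)).
      assert (HTc : 0 < tau c) by (apply Tpos; lra).
      assert (Hdc := Ldr c ltac:(lra)).
      assert (Hwc0 : 0 < w c).
      { assert (0 < dr c) by (apply Hrpos; lra). unfold w; apply Rdiv_lt_0_compat; auto. }
      assert (Q : dr c * c <= k * r c).
      { rewrite Hdc. unfold k.
        apply (Rmult_le_reg_r mu0); [lra|].
        replace (w x * mu1 / mu0 * r c * mu0) with (w x * (mu1 * r c)) by (field; lra).
        replace (w c * tau c * c * mu0) with (w c * (tau c * (mu0 * c))) by ring.
        apply Rle_trans with (w x * (tau c * (mu0 * c))).
        - apply Rmult_le_compat_r; [|lra]. apply Rmult_le_pos; nra.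
        - apply Rmult_le_compat_l; lra. }
      assert (/ r c * dr c - k * / c <= 0).
      { replace (/ r c * dr c - k * / c) with ((dr c * c - k * r c) / (r c * c)) by (field; lra).
        assert (0 < / (r c * c)) by (apply Rinv_0_lt_compat; nra).
        unfold Rdiv. nra. }
      nra. }
    destruct (small_ln x (ln (dr x) - (ln (r x) - k * ln x)) (1 - k) ltac:(lra) ltac:(lra))
      as [rho [Hrho Hbig]].
    assert (K1 := HLm rho Hrho).
    assert (K2 : ln (r rho) <= ln (dr x) + ln rho).
    { rewrite <- ln_mult; auto; [|lra]. apply ln_le'; [apply Rpos; lra|apply Hrhi; auto]. }
    nra. }
  assert (Wc1 : limit1_in w D01 (w 1) 1).
  { assert (H1 : D01 1) by (unfold D01; lra).
    assert (Hrc := deriv_cont _ _ _ _ (proj1 Hr1 1 H1)).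
    assert (Hr1p : 0 < r 1) by (apply Rpos; lra).
    assert (Hfc := deriv_cont _ _ _ _ (proj1 Hf (r 1) ltac:(lra))).
    assert (Hfr := limit_comp r f D01 (fun y => 0 <= y) _ _ 1 Hrc Hfc).
    assert (Hfr' : limit1_in (fun x => f (r x)) D01 (f (r 1)) 1).
    { apply (lim_restrict _ _ _ _ _ Hfr). intros y Hy. split; auto.
      assert (0 < r y) by (apply Rpos; auto). lra. }
    assert (Hf1 : limit1_in f D01 (f 1) 1).
    { apply (lim_restrict _ _ _ _ _ (deriv_cont _ _ _ _ (proj1 Hf 1 ltac:(lra)))).
      intros y Hy. unfold D01 in Hy; lra. }
    assert (Hdr1 : limit1_in dr D01 (dr 1) 1) by exact (proj2 Hr1 1 H1).
    assert (Hf1p : 0 < f 1) by (apply Fpos; lra).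
    assert (Hfr1p : 0 < f (r 1)) by (apply Fpos; lra).
    assert (K1 := limit_inv _ _ _ _ Hf1 ltac:(lra)).
    assert (K2 := limit_mul _ _ _ _ _ _ Hfr' K1).
    assert (K3 := limit_inv _ _ _ _ K2 ltac:(assert (0 < / f 1) by (apply Rinv_0_lt_compat; lra); nra)).
    assert (K4 := limit_mul _ _ _ _ _ _ Hdr1 K3).
    exact K4. }
  assert (W01 : forall x, 0 < x <= 1 -> eta0 <= w x <= eta1).
  { intros x Hx. destruct (Req_dec x 1) as [->|Hne]; [|split; [apply ML|apply MU]; lra].
    split.
    - destruct (Rle_or_lt eta0 (w 1)) as [h'|h']; auto. exfalso.
      destruct (Wc1 (eta0 - w 1) ltac:(lra)) as [alp [Ha Hb']].
      destruct (left_pt 0 1 alp ltac:(lra) Ha) as [Hy1 Hy2].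
      assert (Hd : dist R_met (1 - Rmin alp (1 - 0) / 2) 1 < alp) by (simpl; unfold R_dist; lra).
      assert (K := Hb' _ (conj (conj (proj1 Hy1) (Rlt_le _ _ (proj2 Hy1))) Hd)).
      simpl in K; unfold R_dist in K. apply Rabs_def2 in K.
      assert (eta0 <= w (1 - Rmin alp (1 - 0) / 2)) by (apply ML; lra). lra.
    - destruct (Rle_or_lt (w 1) eta1) as [h'|h']; auto. exfalso.
      destruct (Wc1 (w 1 - eta1) ltac:(lra)) as [alp [Ha Hb']].
      destruct (left_pt 0 1 alp ltac:(lra) Ha) as [Hy1 Hy2].
      assert (Hd : dist R_met (1 - Rmin alp (1 - 0) / 2) 1 < alp) by (simpl; unfold R_dist; lra).
      assert (K := Hb' _ (conj (conj (proj1 Hy1) (Rlt_le _ _ (proj2 Hy1))) Hd)).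
      simpl in K; unfold R_dist in K. apply Rabs_def2 in K.
      assert (w (1 - Rmin alp (1 - 0) / 2) <= eta1) by (apply MU; lra). lra. }
  intros x Hx. change (f (r x) / f x) with (tau x).
  assert (HT := Tpos x Hx). assert (Hd := Ldr x Hx). destruct (W01 x Hx).
  rewrite Hd. split; nra.
Qed.
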